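(* Let a nondegenerate triangle with circumradius $R$ be circumscribed about a central conic one of whose foci coincides with the circumcenter of the triangle, and let $a$ be the semi-major axis of the conic (half the distance between its vertices on the focal axis). Then $R=2a$.
   Context: A central conic is a non-degenerate ellipse or hyperbola. A triangle is circumscribed about a conic if each of its three sidelines is tangent to the conic. *)

(* Defs.v *)
From Stdlib Require Import Reals.
Open Scope R_scope.

Definition pt : Type := (R * R)%type.

Definition psub (P Q : pt) : pt := (fst P - fst Q, snd P - snd Q).
Definition padd (P Q : pt) : pt := (fst P + fst Q, snd P + snd Q).
Definition pscale (k : R) (P : pt) : pt := (k * fst P, k * snd P).
Definition dot (P Q : pt) : R := fst P * fst Q + snd P * snd Q.
Definition cross (P Q : pt) : R := fst P * snd Q - snd P * fst Q.
Definition edist (P Q : pt) : R := sqrt (dot (psub P Q) (psub P Q)).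

Definition collinear (A B C : pt) : Prop := cross (psub B A) (psub C A) = 0.

Definition on_line (P Q X : pt) : Prop := cross (psub Q P) (psub X P) = 0.

(* Central conics: in an orthonormal frame (center, u, v) with v = u rotated by
   +90 degrees, the conic is  x^2/a^2 + eps * y^2/b^2 = 1 with eps = 1 (ellipse)
   or eps = -1 (hyperbola).  The focal axis is the x-axis (direction u), so the
   vertices on the focal axis are center +- a u and a is the semi-major axis. *)
Inductive conic_kind := Ellipse | Hyperbola.

Definition ksign (k : conic_kind) : R :=
  match k with Ellipse => 1 | Hyperbola => -1 end.

Record central_conic := CentralConic {
  cc_center : pt;
  cc_u : pt;
  cc_kind : conic_kind;
  cc_a : R;
  cc_b : R
}.

Definition cc_v (K : central_conic) : pt := (- snd (cc_u K), fst (cc_u K)).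

Definition wf_conic (K : central_conic) : Prop :=
  dot (cc_u K) (cc_u K) = 1 /\ 0 < cc_a K /\ 0 < cc_b K /\
  (cc_kind K = Ellipse -> cc_b K <= cc_a K).

Definition cx (K : central_conic) (X : pt) : R := dot (psub X (cc_center K)) (cc_u K).
Definition cy (K : central_conic) (X : pt) : R := dot (psub X (cc_center K)) (cc_v K).

Definition on_conic (K : central_conic) (X : pt) : Prop :=
  (cx K X)^2 / (cc_a K)^2 + ksign (cc_kind K) * (cy K X)^2 / (cc_b K)^2 = 1.

Definition focal_c (K : central_conic) : R :=
  sqrt ((cc_a K)^2 - ksign (cc_kind K) * (cc_b K)^2).

Definition is_focus (K : central_conic) (F : pt) : Prop :=
  F = padd (cc_center K) (pscale (focal_c K) (cc_u K)) \/
  F = padd (cc_center K) (pscale (- focal_c K) (cc_u K)).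

(* The line through distinct P, Q is tangent to K: it passes through a point X
   of K and its direction is orthogonal to the gradient of the defining
   quadratic form at X (i.e. it is the tangent line of K at X). *)
Definition tangent_line (K : central_conic) (P Q : pt) : Prop :=
  P <> Q /\
  exists X, on_line P Q X /\ on_conic K X /\
    cx K X * dot (psub Q P) (cc_u K) / (cc_a K)^2
    + ksign (cc_kind K) * cy K X * dot (psub Q P) (cc_v K) / (cc_b K)^2 = 0.

(* Main.v *)
Require Import Defs.
From Stdlib Require Import Reals Lra Psatz.
Open Scope R_scope.
Lemma par_zero (d1 d2 e1 : R) : (d1 <> 0 \/ d2 <> 0) ->
  d1*e1 = 0 -> d2*e1 = 0 -> e1 = 0.
Proof. intros [H|H] H1 H2.
- destruct (Rmult_integral _ _ H1); [contradiction|auto].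
- destruct (Rmult_integral _ _ H2); [contradiction|auto].
Qed.

Lemma pedal_alg (px py qx qy x y f a b s : R):
 0<a -> 0<b -> s*s=1 ->
 (qx-px)*(y-py) - (qy-py)*(x-px) = 0 ->
 x^2/a^2 + s*y^2/b^2 = 1 ->
 x*(qx-px)/a^2 + s*y*(qy-py)/b^2 = 0 ->
 f^2 = a^2 - s*b^2 ->
 (px-f)^2+py^2 = (qx-f)^2+qy^2 ->
 (qx-px <> 0 \/ qy-py <> 0) ->
 ((px+qx)/2)^2 + ((py+qy)/2)^2 = a^2.
Proof.
intros Ha Hb Hs Hc Ho Ht Hf Hd Hne.
set (n1 := x/a^2). set (n2 := s*y/b^2).
set (d1 := qx-px) in *. set (d2 := qy-py) in *.
assert (Ha2 : a^2 <> 0) by (apply pow_nonzero; lra).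
assert (Hb2 : b^2 <> 0) by (apply pow_nonzero; lra).
assert (HnX : n1*x + n2*y = 1). { rewrite <- Ho. unfold n1, n2. field; repeat split; lra. }
assert (Hnd : n1*d1 + n2*d2 = 0). { rewrite <- Ht. unfold n1, n2. field; repeat split; lra. }
set (e1 := x - px) in *. set (e2 := y - py) in *.
assert (Hne2 : n1*e1 + n2*e2 = 0).
{ apply (par_zero d1 d2 _ Hne).
  - replace (d1*(n1*e1+n2*e2)) with (e1*(n1*d1+n2*d2) + n2*((d1*e2) - d2*e1)) by ring.
    rewrite Hnd. replace (d1*e2 - d2*e1) with 0 by (unfold d1,d2,e1,e2 in *; lra). ring.
  - replace (d2*(n1*e1+n2*e2)) with (e2*(n1*d1+n2*d2) - n1*((d1*e2) - d2*e1)) by ring.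
    rewrite Hnd. replace (d1*e2 - d2*e1) with 0 by (unfold d1,d2,e1,e2 in *; lra). ring. }
set (m1 := (px+qx)/2). set (m2 := (py+qy)/2).
assert (Hnm : n1*m1 + n2*m2 = 1).
{ unfold m1, m2, e1, e2, d1, d2 in *. nra. }
set (w1 := m1 - f). set (w2 := m2).
assert (Hwd : w1*d1 + w2*d2 = 0).
{ unfold w1, w2, m1, m2, d1, d2 in *. nra. }
assert (Hcr : w1*n2 - w2*n1 = 0).
{ apply (par_zero d1 d2 _ Hne).
  - replace (d1*(w1*n2-w2*n1)) with (n2*(w1*d1+w2*d2) - w2*(n1*d1+n2*d2)) by ring.
    rewrite Hnd, Hwd. ring.
  - replace (d2*(w1*n2-w2*n1)) with (w1*(n1*d1+n2*d2) - n1*(w1*d1+w2*d2)) by ring.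
    rewrite Hnd, Hwd. ring. }
assert (Hnn : 0 < n1^2 + n2^2).
{ destruct (Req_dec n1 0) as [E|E]; [destruct (Req_dec n2 0) as [E2|E2]|].
  - exfalso. rewrite E, E2 in HnX. lra.
  - assert (0 < n2*n2) by (apply Rsqr_pos_lt; auto). nra.
  - assert (0 < n1*n1) by (apply Rsqr_pos_lt; auto). nra. }
assert (Hwn : n1*w1 + n2*w2 = 1 - f*n1) by (unfold w1, w2 in *; nra).
assert (Hw1 : w1 * (n1^2+n2^2) = (1 - f*n1)*n1).
{ rewrite <- Hwn. replace (w1 * (n1^2+n2^2)) with ((n1*w1+n2*w2)*n1 + n2*(w1*n2-w2*n1)) by ring.
  rewrite Hcr. ring. }
assert (Hw2 : w2 * (n1^2+n2^2) = (1 - f*n1)*n2).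
{ rewrite <- Hwn. replace (w2 * (n1^2+n2^2)) with ((n1*w1+n2*w2)*n2 - n1*(w1*n2-w2*n1)) by ring.
  rewrite Hcr. ring. }
assert (E : s*b^2*n2^2 = 1 - a^2*n1^2).
{ unfold n1, n2.
  replace (s*b^2*(s*y/b^2)^2) with (s*s*(s*y^2/b^2)) by (field; lra).
  replace (a^2*(x/a^2)^2) with (x^2/a^2) by (field; lra).
  rewrite Hs. lra. }
assert (Hkey : 1 - f^2*n1^2 = s*b^2*(n1^2+n2^2)).
{ rewrite Hf. lra. }
assert (Hm : m1 = f + w1) by (unfold w1; ring).
rewrite Hm. fold w2.
set (N := n1^2+n2^2) in *.
assert (Hww : (w1^2+w2^2)*N = (1-f*n1)^2).
{ apply (Rmult_eq_reg_r N); [|lra].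
  replace ((w1^2+w2^2)*N*N) with ((w1*N)^2 + (w2*N)^2) by ring.
  rewrite Hw1, Hw2. unfold N. ring. }
apply (Rmult_eq_reg_r N); [|lra].
replace (((f + w1) / 1) ^ 2 + w2 ^ 2) with ((f+w1)^2+w2^2) by field.
replace (((f+w1)^2+w2^2)*N) with (f^2*N + 2*f*(w1*N) + (w1^2+w2^2)*N) by ring.
rewrite Hw1, Hww.
replace (a^2) with (f^2 + s*b^2) by lra.
replace ((f^2 + s*b^2)*N) with (f^2*N + s*b^2*N) by ring.
rewrite <- Hkey. ring.
Qed.
Lemma frame_norm (u1 u2 v1 v2 : R) : u1*u1+u2*u2 = 1 ->
  v1*v1+v2*v2 = (v1*u1+v2*u2)^2 + (v1*(-u2)+v2*u1)^2.
Proof. intros H. replace ((v1*u1+v2*u2)^2 + (v1*(-u2)+v2*u1)^2) with ((v1*v1+v2*v2)*(u1*u1+u2*u2)) by ring. rewrite H; ring. Qed.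

Lemma frame_cross (u1 u2 a1 a2 b1 b2 : R) : u1*u1+u2*u2 = 1 ->
  (a1*u1+a2*u2)*(b1*(-u2)+b2*u1) - (a1*(-u2)+a2*u1)*(b1*u1+b2*u2) = a1*b2 - a2*b1.
Proof. intros H. replace (a1*b2 - a2*b1) with ((a1*b2 - a2*b1)*(u1*u1+u2*u2)) by (rewrite H; ring). ring. Qed.

Lemma frame_sq (u1 u2 v1 v2 g : R) : u1*u1+u2*u2=1 ->
  (v1*u1+v2*u2 - g)^2 + (v1*(-u2)+v2*u1)^2 = (v1 - g*u1)*(v1-g*u1) + (v2-g*u2)*(v2-g*u2).
Proof. intros H. rewrite (frame_norm u1 u2 (v1-g*u1) (v2-g*u2) H).
replace g with (g*(u1*u1+u2*u2)) at 1 by (rewrite H; ring). ring. Qed.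

Lemma pedal (K : central_conic) (P Q F : pt) :
  wf_conic K -> tangent_line K P Q -> is_focus K F ->
  dot (psub P F) (psub P F) = dot (psub Q F) (psub Q F) ->
  dot (psub (pscale (/2) (padd P Q)) (cc_center K)) (psub (pscale (/2) (padd P Q)) (cc_center K)) = (cc_a K)^2.
Proof.
destruct K as [[z1 z2] [u1 u2] k a b].
destruct P as [p1 p2], Q as [q1 q2], F as [f1 f2].
unfold wf_conic, tangent_line, is_focus, on_line, on_conic, focal_c, cx, cy, cc_v, dot, psub, padd, pscale, cross.
cbn [fst snd cc_center cc_u cc_kind cc_a cc_b].
intros [Hu [Ha [Hb Hk]]] [Hne [[x1 x2] [Hl [Ho Ht]]]] Hf Hd.
cbn [fst snd] in *.
set (s := ksign k) in *.
assert (Hs : s*s = 1) by (unfold s; destruct k; simpl; ring).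
assert (Hpos : 0 <= a^2 - s*b^2).
{ unfold s; destruct k; simpl. - specialize (Hk eq_refl). nra. - nra. }
clearbody s.
set (c := sqrt (a^2 - s*b^2)) in *.
assert (Hc2 : c^2 = a^2 - s*b^2). { unfold c. rewrite <- Rsqr_pow2. apply Rsqr_sqrt. exact Hpos. }
assert (Hfe : exists f, f^2 = a^2 - s*b^2 /\ f1 = z1 + f*u1 /\ f2 = z2 + f*u2).
{ destruct Hf as [Hf|Hf]; injection Hf; intros; [exists c | exists (-c)]; repeat split; auto.
  rewrite <- Hc2; ring. }
clear Hf c Hc2. destruct Hfe as [f [Hf2 [-> ->]]].
pose proof (pedal_alg ((p1-z1)*u1+(p2-z2)*u2) ((p1-z1)*(-u2)+(p2-z2)*u1)
  ((q1-z1)*u1+(q2-z2)*u2) ((q1-z1)*(-u2)+(q2-z2)*u1)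
  ((x1-z1)*u1+(x2-z2)*u2) ((x1-z1)*(-u2)+(x2-z2)*u1) f a b s Ha Hb Hs) as H.
rewrite (frame_norm u1 u2 _ _ Hu).
match type of H with _ -> _ -> _ -> _ -> _ -> _ -> ?L = _ => transitivity L end. 1:{ clear -Hu. field. }
apply H; clear H.
- transitivity (((q1-p1)*(x2-p2) - (q2-p2)*(x1-p1))*(u1*u1+u2*u2)); [ring | rewrite Hl; ring].
- exact Ho.
- match type of Ht with ?L = 0 => transitivity L; [unfold Rdiv; ring | exact Ht] end.
- exact Hf2.
- rewrite (frame_sq u1 u2 (p1-z1) (p2-z2) f Hu), (frame_sq u1 u2 (q1-z1) (q2-z2) f Hu).
  replace (p1 - z1 - f*u1) with (p1 - (z1 + f*u1)) by ring.
  replace (p2 - z2 - f*u2) with (p2 - (z2 + f*u2)) by ring.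
  replace (q1 - z1 - f*u1) with (q1 - (z1 + f*u1)) by ring.
  replace (q2 - z2 - f*u2) with (q2 - (z2 + f*u2)) by ring.
  exact Hd.
- match goal with |- ?A <> 0 \/ ?B <> 0 =>
    destruct (Req_dec A 0) as [E1|E1]; [|left; exact E1];
    destruct (Req_dec B 0) as [E2|E2]; [|right; exact E2] end.
  exfalso; apply Hne.
  pose proof (frame_norm u1 u2 (q1-p1) (q2-p2) Hu) as N.
  replace ((q1-p1)*u1+(q2-p2)*u2) with 0 in N by (rewrite <- E1; ring).
  replace ((q1-p1)*(-u2)+(q2-p2)*u1) with 0 in N by (rewrite <- E2; ring).
  assert (Hz: (q1-p1)*(q1-p1) + (q2-p2)*(q2-p2) = 0) by (rewrite N; ring).
  pose proof (Rle_0_sqr (q1-p1)); pose proof (Rle_0_sqr (q2-p2)); unfold Rsqr in *.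
  assert (Z1 : (q1-p1)*(q1-p1) = 0) by lra. assert (Z2 : (q2-p2)*(q2-p2) = 0) by lra.
  apply Rmult_integral in Z1; apply Rmult_integral in Z2.
  assert (q1 - p1 = 0) by tauto. assert (q2 - p2 = 0) by tauto.
  f_equal; lra.
Qed.

Lemma ninept (a1 a2 b1 b2 c1 c2 o1 o2 z1 z2 r R2 : R) :
  (b1-a1)*(c2-a2) - (b2-a2)*(c1-a1) <> 0 ->
  (a1-o1)*(a1-o1) + (a2-o2)*(a2-o2) = R2 ->
  (b1-o1)*(b1-o1) + (b2-o2)*(b2-o2) = R2 ->
  (c1-o1)*(c1-o1) + (c2-o2)*(c2-o2) = R2 ->
  (/2*(a1+b1) - z1)*(/2*(a1+b1) - z1) + (/2*(a2+b2) - z2)*(/2*(a2+b2) - z2) = r ->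
  (/2*(b1+c1) - z1)*(/2*(b1+c1) - z1) + (/2*(b2+c2) - z2)*(/2*(b2+c2) - z2) = r ->
  (/2*(c1+a1) - z1)*(/2*(c1+a1) - z1) + (/2*(c2+a2) - z2)*(/2*(c2+a2) - z2) = r ->
  4 * r = R2.
Proof.
intros Hcr HA HB HC H1 H2 H3.
set (w1 := z1 - (a1+b1+c1-o1)/2). set (w2 := z2 - (a2+b2+c2-o2)/2).
assert (E1 : r = R2/4 + ((c1-o1)*w1+(c2-o2)*w2) + (w1*w1+w2*w2)).
{ rewrite <- H1, <- HC. unfold w1, w2. field. }
assert (E2 : r = R2/4 + ((a1-o1)*w1+(a2-o2)*w2) + (w1*w1+w2*w2)).
{ rewrite <- H2, <- HA. unfold w1, w2. field. }
assert (E3 : r = R2/4 + ((b1-o1)*w1+(b2-o2)*w2) + (w1*w1+w2*w2)).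
{ rewrite <- H3, <- HB. unfold w1, w2. field. }
clearbody w1 w2.
assert (F1 : (b1-a1)*w1 + (b2-a2)*w2 = 0) by lra.
assert (F2 : (c1-a1)*w1 + (c2-a2)*w2 = 0) by lra.
assert (W1 : w1 = 0).
{ apply (Rmult_eq_reg_r ((b1-a1)*(c2-a2) - (b2-a2)*(c1-a1))); [|exact Hcr].
  transitivity ((c2-a2)*((b1-a1)*w1 + (b2-a2)*w2) - (b2-a2)*((c1-a1)*w1 + (c2-a2)*w2)); [ring|].
  rewrite F1, F2. ring. }
assert (W2 : w2 = 0).
{ apply (Rmult_eq_reg_r ((b1-a1)*(c2-a2) - (b2-a2)*(c1-a1))); [|exact Hcr].
  transitivity ((b1-a1)*((c1-a1)*w1 + (c2-a2)*w2) - (c1-a1)*((b1-a1)*w1 + (b2-a2)*w2)); [ring|].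
  rewrite F1, F2. ring. }
rewrite W1, W2 in E1. lra.
Qed.

Lemma dot_nonneg (P : pt) : 0 <= dot P P.
Proof. destruct P as [x y]; unfold dot; simpl. nra. Qed.

Lemma edist_sq (O P Q : pt) : edist O P = edist O Q ->
  dot (psub P O) (psub P O) = dot (psub Q O) (psub Q O).
Proof.
unfold edist. intros H. apply sqrt_inj in H; try apply dot_nonneg.
destruct O, P, Q; unfold dot, psub in *; simpl in *. lra.
Qed.

Theorem corollary2p4 (K : central_conic) (A B C Oc : pt) :
  wf_conic K ->
  ~ collinear A B C ->
  tangent_line K A B -> tangent_line K B C -> tangent_line K C A ->
  edist Oc A = edist Oc B -> edist Oc B = edist Oc C ->
  is_focus K Oc ->
  edist Oc A = 2 * cc_a K.
Proof.
intros Hw Hcol T1 T2 T3 E1 E2 Hf.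
pose proof (edist_sq _ _ _ E1) as S1.
pose proof (edist_sq _ _ _ E2) as S2.
pose proof (pedal K A B Oc Hw T1 Hf S1) as P1.
pose proof (pedal K B C Oc Hw T2 Hf S2) as P2.
pose proof (pedal K C A Oc Hw T3 Hf (eq_sym (eq_trans S1 S2))) as P3.
assert (Ha : 0 < cc_a K) by (destruct Hw as [_ [H _]]; exact H).
unfold edist.
destruct K as [[z1 z2] u k a b]. cbn [cc_center cc_a] in *.
destruct A as [a1 a2], B as [b1 b2], C as [c1 c2], Oc as [o1 o2].
unfold collinear, cross, dot, psub, padd, pscale in *. cbn [fst snd] in *.
assert (H4 : 4 * a^2 = (a1-o1)*(a1-o1) + (a2-o2)*(a2-o2)).
{ apply (ninept a1 a2 b1 b2 c1 c2 o1 o2 z1 z2); auto; lra. }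
replace ((o1 - a1) * (o1 - a1) + (o2 - a2) * (o2 - a2)) with ((2*a)^2) by (rewrite <- (Rmult_1_r (2*a)) at 1; nra).
apply sqrt_pow2. lra.
Qed.
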